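(* Let $\phi\in C^4(\mathbb{R})$ be a profile function of a graph-like backward self-similar solution to the planar surface diffusion flow, i.e. $$\frac{\phi(x_1) - x_1\phi'(x_1)}{4\,v(x_1)} = \frac{1}{v}\frac{d}{dx_1}\Big(\frac{1}{v}\frac{dk}{dx_1}\Big)\quad\text{on }\mathbb{R},\qquad v=\sqrt{1+(\phi')^2},\ k=\phi''/v^3.$$ Define $$D_0[\phi](x_1) := \phi(x_1)^2 + x_1^2 - \Big(\int_0^{x_1}\sqrt{1+\phi'(z)^2}\,dz + |\phi(0)|\Big)^2.$$ If $\phi$ is not linear, then $\liminf_{x_1\to+\infty} D_0[\phi](x_1) = -\infty$ or $\liminf_{x_1\to-\infty} D_0[\phi](x_1) = -\infty$.
   Context: The displayed equation is the backward profile equation $\frac{x\cdot\mathbf{n}}{4}=\partial_s^2 k$ for the graph $\Gamma_*=\{(x_1,\phi(x_1))\}$, with upward unit normal $\mathbf{n}=(-\phi',1)/v$, curvature $k$ and arc-length derivative $\partial_s=v^{-1}\partial_{x_1}$. ''Linear'' means $\phi(x_1)=cx_1+c'$ for constants $c,c'$. *)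

(* Defs.v *)
From Stdlib Require Import Reals.
From Coquelicot Require Import Coquelicot.
Open Scope R_scope.

Definition C4 (phi : R -> R) : Prop :=
  (forall (n : nat) (x : R), (n <= 4)%nat -> ex_derive_n phi n x) /\
  (forall x : R, continuous (Derive_n phi 4) x).

Definition vfun (phi : R -> R) (x : R) : R := sqrt (1 + (Derive phi x) ^ 2).

Definition kfun (phi : R -> R) (x : R) : R := Derive_n phi 2 x / (vfun phi x) ^ 3.

Definition profile_eq (phi : R -> R) : Prop :=
  forall x : R,
    (phi x - x * Derive phi x) / (4 * vfun phi x) =
    / vfun phi x * Derive (fun y => / vfun phi y * Derive (kfun phi) y) x.

Definition phi_is_linear (phi : R -> R) : Prop :=
  exists c c' : R, forall x, phi x = c * x + c'.

Definition D0 (phi : R -> R) (x : R) : R :=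
  phi x ^ 2 + x ^ 2 -
  (RInt (fun z => sqrt (1 + (Derive phi z) ^ 2)) 0 x + Rabs (phi 0)) ^ 2.

Definition liminf_pinfty_minfty (f : R -> R) : Prop :=
  forall M N : R, exists x : R, N < x /\ f x < M.

Definition liminf_minfty_minfty (f : R -> R) : Prop :=
  forall M N : R, exists x : R, x < N /\ f x < M.

(* Main.v *)
Require Import Defs.
From Stdlib Require Import Reals Lra Lia.
From Coquelicot Require Import Coquelicot.
Open Scope R_scope.

Lemma alg_ineq (X P Q : R) : 0 < X^2 + P^2 ->
  Rabs (X + P*Q) <= sqrt (X^2+P^2) * sqrt (1 + Q^2) /\
  (Rabs (X + P*Q) = sqrt (X^2+P^2) * sqrt (1 + Q^2) -> P = X * Q).
Proof.
  intros H.
  assert (H1: 0 <= 1 + Q^2) by nra.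
  rewrite <- sqrt_mult_alt by lra.
  assert (E: Rabs (X + P*Q) = sqrt ((X+P*Q)^2)).
  { rewrite <- sqrt_Rsqr_abs. f_equal. unfold Rsqr. ring. }
  rewrite E. split.
  - apply sqrt_le_1_alt. assert (0 <= (X*Q-P)^2) by apply pow2_ge_0.
    assert ((X^2+P^2)*(1+Q^2) - (X+P*Q)^2 = (X*Q-P)^2) by ring. lra.
  - intros Heq. assert (P1: 0 <= (X+P*Q)^2) by apply pow2_ge_0.
    assert (P2: 0 <= (X^2+P^2)*(1+Q^2)) by (apply Rmult_le_pos; lra).
    apply (sqrt_inj _ _ P1 P2) in Heq.
    assert ((X^2+P^2)*(1+Q^2) - (X+P*Q)^2 = (X*Q-P)^2) by ring.
    assert (Z: (X*Q - P)^2 = 0) by lra. replace ((X*Q-P)^2) with ((X*Q-P)*(X*Q-P)) in Z by ring. apply Rmult_integral in Z. lra.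
Qed.

Lemma cont_eq_right (f u : R -> R) : continuous f 0 -> continuous u 0 ->
  (forall t, 0 < t -> f t = u t) -> f 0 = u 0.
Proof.
  intros Hf Hu H.
  apply continuity_pt_filterlim in Hf. apply continuity_pt_filterlim in Hu.
  unfold continuity_pt, continue_in, limit1_in, limit_in in Hf, Hu.
  destruct (Req_dec (f 0) (u 0)) as [|Hne]; auto.
  set (e := Rabs (f 0 - u 0)).
  assert (He : 0 < e) by (apply Rabs_pos_lt; lra).
  assert (He2 : e/2 > 0) by lra.
  destruct (Hf (e/2) He2) as [d1 [Hd1 H1]].
  destruct (Hu (e/2) He2) as [d2 [Hd2 H2]].
  set (t := Rmin d1 d2 / 2).
  assert (Hm : 0 < Rmin d1 d2) by (apply Rmin_pos; lra).
  assert (Ht : 0 < t) by (unfold t; lra).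
  assert (Htd1 : t < d1) by (unfold t; generalize (Rmin_l d1 d2); lra).
  assert (Htd2 : t < d2) by (unfold t; generalize (Rmin_r d1 d2); lra).
  specialize (H1 t). specialize (H2 t). simpl in H1, H2. unfold R_dist, D_x, no_cond in *.
  assert (A : Rabs (t - 0) < d1 /\ Rabs (t-0) < d2) by (rewrite Rminus_0_r, Rabs_pos_eq; lra).
  assert (N0 : 0 <> t) by (apply Rlt_not_eq; lra).
  specialize (H1 (conj (conj I N0) (proj1 A))).
  specialize (H2 (conj (conj I N0) (proj2 A))).
  rewrite H in H1 by lra.
  unfold e in *. 
  assert (Rabs (f 0 - u 0) <= Rabs (u t - f 0) + Rabs (u t - u 0)).
  { replace (f 0 - u 0) with (-(u t - f 0) + (u t - u 0)) by ring.
    eapply Rle_trans; [apply Rabs_triang|]. rewrite Rabs_Ropp. lra. }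
  lra.
Qed.

Lemma cont_eq_left (f u : R -> R) : continuous f 0 -> continuous u 0 ->
  (forall t, t < 0 -> f t = u t) -> f 0 = u 0.
Proof.
  intros Hf Hu H.
  apply continuity_pt_filterlim in Hf. apply continuity_pt_filterlim in Hu.
  unfold continuity_pt, continue_in, limit1_in, limit_in in Hf, Hu.
  destruct (Req_dec (f 0) (u 0)) as [|Hne]; auto.
  set (e := Rabs (f 0 - u 0)).
  assert (He : 0 < e) by (apply Rabs_pos_lt; lra).
  assert (He2 : e/2 > 0) by lra.
  destruct (Hf (e/2) He2) as [d1 [Hd1 H1]].
  destruct (Hu (e/2) He2) as [d2 [Hd2 H2]].
  set (t := - (Rmin d1 d2 / 2)).
  assert (Hm : 0 < Rmin d1 d2) by (apply Rmin_pos; lra).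
  assert (Ht : t < 0) by (unfold t; lra).
  assert (Htd1 : -t < d1) by (unfold t; generalize (Rmin_l d1 d2); lra).
  assert (Htd2 : -t < d2) by (unfold t; generalize (Rmin_r d1 d2); lra).
  specialize (H1 t). specialize (H2 t). simpl in H1, H2. unfold R_dist, D_x, no_cond in *.
  assert (A : Rabs (t - 0) < d1 /\ Rabs (t-0) < d2) by (rewrite Rminus_0_r, Rabs_left; lra).
  assert (N0 : 0 <> t) by (apply Rgt_not_eq; lra).
  specialize (H1 (conj (conj I N0) (proj1 A))).
  specialize (H2 (conj (conj I N0) (proj2 A))).
  rewrite H in H1 by lra.
  unfold e in *. 
  assert (Rabs (f 0 - u 0) <= Rabs (u t - f 0) + Rabs (u t - u 0)).
  { replace (f 0 - u 0) with (-(u t - f 0) + (u t - u 0)) by ring.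
    eapply Rle_trans; [apply Rabs_triang|]. rewrite Rabs_Ropp. lra. }
  lra.
Qed.

Definition rr (phi:R->R) x := sqrt (x^2 + phi x ^2).
Definition LL (phi:R->R) x := RInt (vfun phi) 0 x.
Definition dd (phi:R->R) x := (x + phi x * Derive phi x) / rr phi x.

Lemma vfun_deriv phi (Hd2 : forall x, ex_derive (Derive phi) x) x : ex_derive (vfun phi) x.
Proof. unfold vfun. auto_derive. split; [apply Hd2|]. split; [|auto].
  assert (0 <= Derive phi x * Derive phi x) by apply Rle_0_sqr. lra. Qed.

Lemma vfun_cont phi (Hd2 : forall x, ex_derive (Derive phi) x) x : continuous (vfun phi) x.
Proof. apply (@ex_derive_continuous R_AbsRing R_NormedModule), vfun_deriv, Hd2. Qed.

Lemma vfun_ge phi x : 0 <= vfun phi x.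
Proof. apply sqrt_pos. Qed.

Lemma LL_deriv phi (Hd2 : forall x, ex_derive (Derive phi) x) x : is_derive (LL phi) x (vfun phi x).
Proof.
  apply is_derive_RInt with 0.
  - apply filter_forall. intros b. apply RInt_correct, (@ex_RInt_continuous R_CompleteNormedModule).
    intros; apply vfun_cont, Hd2.
  - apply vfun_cont, Hd2.
Qed.

Lemma LL_cont phi (Hd2 : forall x, ex_derive (Derive phi) x) x : continuous (LL phi) x.
Proof. apply (@ex_derive_continuous R_AbsRing R_NormedModule). eexists. apply LL_deriv, Hd2. Qed.

Lemma LL_0 phi : LL phi 0 = 0.
Proof. unfold LL. rewrite RInt_point. reflexivity. Qed.

Lemma LL_pos phi (Hd2 : forall x, ex_derive (Derive phi) x) x : 0 <= x -> 0 <= LL phi x.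
Proof. intros. unfold LL. apply RInt_ge_0; auto.
  apply (@ex_RInt_continuous R_CompleteNormedModule). intros; apply vfun_cont, Hd2.
  intros; apply vfun_ge. Qed.

Lemma LL_neg phi (Hd2 : forall x, ex_derive (Derive phi) x) x : x <= 0 -> LL phi x <= 0.
Proof. intros. unfold LL.
  assert (E: ex_RInt (vfun phi) x 0) by (apply (@ex_RInt_continuous R_CompleteNormedModule); intros; apply vfun_cont, Hd2).
  rewrite <- (opp_RInt_swap _ _ _ E).
  assert (0 <= RInt (vfun phi) x 0) by (apply RInt_ge_0; auto; intros; apply vfun_ge).
  unfold opp; simpl. lra. Qed.

Lemma rr_cont phi (Hd : forall x, ex_derive phi x) x : continuous (rr phi) x.
Proof. unfold rr. apply (continuous_comp (fun x => x^2 + phi x^2) sqrt).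
  - apply (@ex_derive_continuous R_AbsRing R_NormedModule). auto_derive. auto.
  - apply continuous_sqrt. Qed.

Lemma rr_pos_arg phi x : x <> 0 -> 0 < x^2 + phi x ^2.
Proof. intros. assert (0 < x^2) by (apply pow2_gt_0; auto).
  assert (0 <= phi x ^2) by apply pow2_ge_0. lra. Qed.

Lemma rr_sq phi x : rr phi x * rr phi x = x^2 + phi x ^2.
Proof. unfold rr. apply sqrt_sqrt. assert (0 <= x^2) by apply pow2_ge_0.
  assert (0 <= phi x ^2) by apply pow2_ge_0. lra. Qed.

Lemma rr_ge phi x : Rabs x <= rr phi x.
Proof. unfold rr. rewrite <- sqrt_Rsqr_abs. apply sqrt_le_1_alt.
  assert (0 <= phi x ^2) by apply pow2_ge_0. unfold Rsqr. lra. Qed.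

Lemma rr_deriv phi (Hd : forall x, ex_derive phi x) x : x <> 0 ->
  is_derive (rr phi) x (dd phi x).
Proof. intros Hx. pose proof (rr_pos_arg phi x Hx) as P. unfold rr, dd, rr.
  auto_derive. split; [apply Hd|]. split; auto.
  replace (x * (x * 1) + phi x * (phi x * 1)) with (x^2 + phi x^2) by ring.
  change (Derive (fun x0 => phi x0) x) with (Derive phi x).
  assert (0 < sqrt (x ^ 2 + phi x ^ 2)) by (apply sqrt_lt_R0; auto).
  field. lra. Qed.

Lemma dd_bound phi x : x <> 0 ->
  Rabs (dd phi x) <= vfun phi x /\
  (Rabs (dd phi x) = vfun phi x -> phi x = x * Derive phi x).
Proof. intros Hx. pose proof (rr_pos_arg phi x Hx) as P.
  destruct (alg_ineq x (phi x) (Derive phi x) P) as [A B].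
  assert (Hr : 0 < rr phi x) by (apply sqrt_lt_R0; auto).
  unfold dd. unfold Rdiv. rewrite Rabs_mult, Rabs_inv.
  rewrite (Rabs_pos_eq (rr phi x)) by lra.
  unfold vfun. fold (rr phi x) in A, B. split.
  - apply Rmult_le_reg_r with (rr phi x); auto.
    rewrite Rmult_assoc, Rinv_l by lra. lra.
  - intros E. apply B. rewrite <- E. field. lra.
Qed.

Definition gg phi x := rr phi x - LL phi x - Rabs (phi 0).
Definition hh phi x := rr phi x + LL phi x - Rabs (phi 0).

Lemma gg_0 phi : gg phi 0 = 0.
Proof. unfold gg, rr. rewrite LL_0.
  replace (0^2 + phi 0 ^2) with (Rsqr (phi 0)) by (unfold Rsqr; ring).
  rewrite sqrt_Rsqr_abs. ring. Qed.

Lemma hh_0 phi : hh phi 0 = 0.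
Proof. unfold hh, rr. rewrite LL_0.
  replace (0^2 + phi 0 ^2) with (Rsqr (phi 0)) by (unfold Rsqr; ring).
  rewrite sqrt_Rsqr_abs. ring. Qed.

Lemma gg_deriv phi (Hd : forall x, ex_derive phi x) (Hd2 : forall x, ex_derive (Derive phi) x) x :
  x <> 0 -> is_derive (gg phi) x (dd phi x - vfun phi x).
Proof. intros Hx. apply is_derive_Reals.
  replace (dd phi x - vfun phi x) with (dd phi x - vfun phi x - 0) by ring.
  change (gg phi) with (minus_fct (minus_fct (rr phi) (LL phi)) (fct_cte (Rabs (phi 0)))).
  apply derivable_pt_lim_minus; [apply derivable_pt_lim_minus|apply derivable_pt_lim_const];
  apply is_derive_Reals. apply rr_deriv; auto. apply LL_deriv; auto.
Qed.

Lemma hh_deriv phi (Hd : forall x, ex_derive phi x) (Hd2 : forall x, ex_derive (Derive phi) x) x :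
  x <> 0 -> is_derive (hh phi) x (dd phi x + vfun phi x).
Proof. intros Hx. apply is_derive_Reals.
  replace (dd phi x + vfun phi x) with (dd phi x + vfun phi x - 0) by ring.
  change (hh phi) with (minus_fct (plus_fct (rr phi) (LL phi)) (fct_cte (Rabs (phi 0)))).
  apply derivable_pt_lim_minus; [apply derivable_pt_lim_plus|apply derivable_pt_lim_const];
  apply is_derive_Reals. apply rr_deriv; auto. apply LL_deriv; auto.
Qed.

Lemma gg_cont phi (Hd : forall x, ex_derive phi x) (Hd2 : forall x, ex_derive (Derive phi) x) x :
  continuity_pt (gg phi) x.
Proof.
  change (gg phi) with (minus_fct (minus_fct (rr phi) (LL phi)) (fct_cte (Rabs (phi 0)))).
  apply continuity_pt_minus; [apply continuity_pt_minus|apply continuity_pt_const; intros ? ?; reflexivity];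
  apply continuity_pt_filterlim. apply rr_cont; auto. apply LL_cont; auto.
Qed.

Lemma hh_cont phi (Hd : forall x, ex_derive phi x) (Hd2 : forall x, ex_derive (Derive phi) x) x :
  continuity_pt (hh phi) x.
Proof.
  change (hh phi) with (minus_fct (plus_fct (rr phi) (LL phi)) (fct_cte (Rabs (phi 0)))).
  apply continuity_pt_minus; [apply continuity_pt_plus|apply continuity_pt_const; intros ? ?; reflexivity];
  apply continuity_pt_filterlim. apply rr_cont; auto. apply LL_cont; auto.
Qed.

Lemma gg_dec phi (Hd : forall x, ex_derive phi x) (Hd2 : forall x, ex_derive (Derive phi) x) a b :
  0 <= a -> a <= b -> gg phi b <= gg phi a.
Proof. intros Ha Hab.
  destruct (MVT_gen (gg phi) a b (fun t => Rmin 0 (dd phi t - vfun phi t))) as [c [Hc E]].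
  - intros t Ht. rewrite Rmin_left in Ht by lra. rewrite Rmax_right in Ht by lra.
    assert (Ht0 : t <> 0) by (apply Rgt_not_eq; lra).
    destruct (dd_bound phi t Ht0) as [B _].
    rewrite Rmin_right. apply gg_deriv; auto.
    generalize (Rle_abs (dd phi t)). lra.
  - intros; apply gg_cont; auto.
  - assert (Rmin 0 (dd phi c - vfun phi c) <= 0) by apply Rmin_l.
    assert (Rmin 0 (dd phi c - vfun phi c) * (b - a) <= 0).
    { apply Rmult_le_0_r; lra. }
    lra.
Qed.

Lemma hh_inc phi (Hd : forall x, ex_derive phi x) (Hd2 : forall x, ex_derive (Derive phi) x) a b :
  a <= b -> b <= 0 -> hh phi a <= hh phi b.
Proof. intros Hab Hb.
  destruct (MVT_gen (hh phi) a b (fun t => Rmax 0 (dd phi t + vfun phi t))) as [c [Hc E]].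
  - intros t Ht. rewrite Rmin_left in Ht by lra. rewrite Rmax_right in Ht by lra.
    assert (Ht0 : t <> 0) by (apply Rlt_not_eq; lra).
    destruct (dd_bound phi t Ht0) as [B _].
    rewrite Rmax_right. apply hh_deriv; auto.
    generalize (Rle_abs (- dd phi t)). rewrite Rabs_Ropp. lra.
  - intros; apply hh_cont; auto.
  - assert (0 <= Rmax 0 (dd phi c + vfun phi c)) by apply Rmax_l.
    assert (0 <= Rmax 0 (dd phi c + vfun phi c) * (b - a)).
    { apply Rmult_le_pos; lra. }
    lra.
Qed.

Lemma gg_zero_lin phi (Hd : forall x, ex_derive phi x) (Hd2 : forall x, ex_derive (Derive phi) x) :
  (forall x, 0 < x -> gg phi x = 0) -> forall x, 0 < x -> phi x = x * Derive phi x.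
Proof. intros H x Hx.
  assert (Hx0 : x <> 0) by (apply Rgt_not_eq; lra).
  assert (D1 : is_derive (gg phi) x 0).
  { apply (is_derive_ext_loc (fun _ => 0)).
    - apply (filter_imp (fun t => 0 < t)). intros t Ht. symmetry. apply H; auto.
      apply open_gt. auto.
    - apply is_derive_Reals, (derivable_pt_lim_const 0). }
  pose proof (gg_deriv phi Hd Hd2 x Hx0) as D2.
  apply is_derive_unique in D1. apply is_derive_unique in D2.
  destruct (dd_bound phi x Hx0) as [_ B]. apply B.
  rewrite Rabs_pos_eq; pose proof (vfun_ge phi x); lra.
Qed.

Lemma hh_zero_lin phi (Hd : forall x, ex_derive phi x) (Hd2 : forall x, ex_derive (Derive phi) x) :
  (forall x, x < 0 -> hh phi x = 0) -> forall x, x < 0 -> phi x = x * Derive phi x.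
Proof. intros H x Hx.
  assert (Hx0 : x <> 0) by (apply Rlt_not_eq; lra).
  assert (D1 : is_derive (hh phi) x 0).
  { apply (is_derive_ext_loc (fun _ => 0)).
    - apply (filter_imp (fun t => t < 0)). intros t Ht. symmetry. apply H; auto.
      apply open_lt. auto.
    - apply is_derive_Reals, (derivable_pt_lim_const 0). }
  pose proof (hh_deriv phi Hd Hd2 x Hx0) as D2.
  apply is_derive_unique in D1. apply is_derive_unique in D2.
  destruct (dd_bound phi x Hx0) as [_ B]. apply B.
  rewrite Rabs_left1; pose proof (vfun_ge phi x); lra.
Qed.

Lemma q_deriv phi (Hd : forall x, ex_derive phi x) t : t <> 0 -> phi t = t * Derive phi t ->
  is_derive (fun y => phi y / y) t 0.
Proof. intros Ht E. auto_derive. split; [apply Hd|]. split; auto.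
  change (Derive (fun x0 => phi x0) t) with (Derive phi t). rewrite E. field. auto. Qed.

Lemma q_cont phi (Hd : forall x, ex_derive phi x) t : t <> 0 -> continuity_pt (fun y => phi y / y) t.
Proof. intros Ht. apply continuity_pt_filterlim.
  apply (@ex_derive_continuous R_AbsRing R_NormedModule (fun y => phi y / y)). auto_derive. split; auto. Qed.

Lemma lin_pos phi (Hd : forall x, ex_derive phi x) :
  (forall t, 0 < t -> phi t = t * Derive phi t) -> forall x, 0 < x -> Derive phi x = Derive phi 1.
Proof. intros H x Hx.
  destruct (MVT_gen (fun y => phi y / y) 1 x (fun _ => 0)) as [c [Hc E]].
  - intros t Ht. assert (0 < t).
    { destruct Ht as [Ht _]. eapply Rle_lt_trans; [|exact Ht]. apply Rmin_glb; lra. }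
    apply q_deriv; auto. apply Rgt_not_eq; lra.
  - intros t Ht. assert (0 < t).
    { destruct Ht as [Ht _]. eapply Rlt_le_trans; [|exact Ht]. apply Rmin_glb_lt; lra. }
    apply q_cont; auto. apply Rgt_not_eq; lra.
  - rewrite Rmult_0_l in E. rewrite (H x Hx), (H 1) in E by lra.
    field_simplify in E; lra.
Qed.

Lemma lin_neg phi (Hd : forall x, ex_derive phi x) :
  (forall t, t < 0 -> phi t = t * Derive phi t) -> forall x, x < 0 -> Derive phi x = Derive phi (-1).
Proof. intros H x Hx.
  destruct (MVT_gen (fun y => phi y / y) (-1) x (fun _ => 0)) as [c [Hc E]].
  - intros t Ht. assert (t < 0).
    { destruct Ht as [_ Ht]. eapply Rlt_le_trans; [exact Ht|]. apply Rmax_lub; lra. }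
    apply q_deriv; auto. apply Rlt_not_eq; lra.
  - intros t Ht. assert (t < 0).
    { destruct Ht as [_ Ht]. eapply Rle_lt_trans; [exact Ht|]. apply Rmax_lub_lt; lra. }
    apply q_cont; auto. apply Rlt_not_eq; lra.
  - rewrite Rmult_0_l in E. rewrite (H x Hx), (H (-1)) in E by lra.
    field_simplify in E; lra.
Qed.

From Stdlib Require Import Classical.

Theorem mainTheorem9 (phi : R -> R) :
  C4 phi -> profile_eq phi -> ~ phi_is_linear phi ->
  liminf_pinfty_minfty (D0 phi) \/ liminf_minfty_minfty (D0 phi).
Proof.
  intros [HC _] _ Hnl.
  assert (Hd : forall x, ex_derive phi x) by (intros x; exact (HC 1%nat x ltac:(lia))).
  assert (Hd2 : forall x, ex_derive (Derive phi) x) by (intros x; exact (HC 2%nat x ltac:(lia))).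
  assert (HD0 : forall x, D0 phi x = rr phi x * rr phi x - (LL phi x + Rabs (phi 0)) ^ 2).
  { intros x. rewrite rr_sq. unfold D0, LL, vfun. ring. }
  destruct (classic (exists x1, 0 < x1 /\ gg phi x1 < 0)) as [[x1 [Hx1 Hg]] | Hno].
  - left. intros M N. set (eps := - gg phi x1).
    assert (He : 0 < eps) by (unfold eps; lra).
    set (x := Rmax x1 (Rmax N (- M / eps)) + 1).
    assert (Hxx1 : x1 < x) by (unfold x; generalize (Rmax_l x1 (Rmax N (-M/eps))); lra).
    assert (HxN : N < x) by (unfold x; generalize (Rmax_r x1 (Rmax N (-M/eps))) (Rmax_l N (-M/eps)); lra).
    assert (HxM : - M / eps < x) by (unfold x; generalize (Rmax_r x1 (Rmax N (-M/eps))) (Rmax_r N (-M/eps)); lra).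
    exists x. split; auto.
    assert (Gx' : gg phi x <= gg phi x1) by (apply gg_dec; auto; lra).
    assert (Gx : gg phi x <= - eps) by (unfold eps; lra).
    pose proof (LL_pos phi Hd2 x ltac:(lra)) as HL.
    pose proof (Rabs_pos (phi 0)) as Hc.
    pose proof (rr_ge phi x) as Hr. rewrite Rabs_pos_eq in Hr by lra.
    rewrite HD0.
    set (S := rr phi x + LL phi x + Rabs (phi 0)).
    assert (E : rr phi x * rr phi x - (LL phi x + Rabs (phi 0)) ^ 2 = gg phi x * S)
      by (unfold S, gg; ring).
    rewrite E.
    assert (gg phi x * S <= - eps * S) by (apply Rmult_le_compat_r; unfold S; lra).
    assert (- eps * S <= - eps * x) by (unfold S; nra).
    assert (eps * (- M / eps) < eps * x) by (apply Rmult_lt_compat_l; auto).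
    replace (eps * (- M / eps)) with (- M) in * by (field; lra).
    lra.
  - assert (Hg0 : forall x, 0 < x -> gg phi x = 0).
    { intros x Hx. pose proof (gg_dec phi Hd Hd2 0 x ltac:(lra) ltac:(lra)) as G.
      rewrite gg_0 in G. destruct (Rle_lt_or_eq_dec _ _ G) as [G'|G']; auto.
      exfalso. apply Hno. exists x. auto. }
    pose proof (gg_zero_lin phi Hd Hd2 Hg0) as HR.
    pose proof (lin_pos phi Hd HR) as HRa.
    assert (Hphi0 : phi 0 = 0).
    { replace 0 with (0 * Derive phi 0) at 2 by ring.
      apply (cont_eq_right phi (fun t => t * Derive phi t)).
      - apply (@ex_derive_continuous R_AbsRing R_NormedModule), Hd.
      - apply (@ex_derive_continuous R_AbsRing R_NormedModule (fun t => t * Derive phi t)).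
        auto_derive. apply Hd2.
      - auto. }
    destruct (classic (exists x1, x1 < 0 /\ hh phi x1 < 0)) as [[x1 [Hx1 Hh]] | Hno2].
    + right. intros M N. set (eps := - hh phi x1).
      assert (He : 0 < eps) by (unfold eps; lra).
      set (x := Rmin x1 (Rmin N (M / eps)) - 1).
      assert (Hxx1 : x < x1) by (unfold x; generalize (Rmin_l x1 (Rmin N (M/eps))); lra).
      assert (HxN : x < N) by (unfold x; generalize (Rmin_r x1 (Rmin N (M/eps))) (Rmin_l N (M/eps)); lra).
      assert (HxM : x < M / eps) by (unfold x; generalize (Rmin_r x1 (Rmin N (M/eps))) (Rmin_r N (M/eps)); lra).
      exists x. split; auto.
      assert (Hx' : hh phi x <= hh phi x1) by (apply hh_inc; auto; lra).
      assert (Hx : hh phi x <= - eps) by (unfold eps; lra).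
      pose proof (LL_neg phi Hd2 x ltac:(lra)) as HL.
      pose proof (rr_ge phi x) as Hr. rewrite Rabs_left in Hr by lra.
      rewrite HD0. rewrite Hphi0, Rabs_R0.
      set (S := rr phi x - LL phi x).
      assert (E : rr phi x * rr phi x - (LL phi x + 0) ^ 2 = hh phi x * S).
      { unfold S, hh. rewrite Hphi0, Rabs_R0. ring. }
      rewrite E.
      assert (hh phi x * S <= - eps * S) by (apply Rmult_le_compat_r; unfold S; lra).
      assert (- eps * S <= eps * x) by (unfold S; nra).
      assert (eps * x < eps * (M / eps)) by (apply Rmult_lt_compat_l; auto).
      replace (eps * (M / eps)) with M in * by (field; lra).
      lra.
    + assert (Hh0 : forall x, x < 0 -> hh phi x = 0).
      { intros x Hx. pose proof (hh_inc phi Hd Hd2 x 0 ltac:(lra) ltac:(lra)) as G.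
        rewrite hh_0 in G. destruct (Rle_lt_or_eq_dec _ _ G) as [G'|G']; auto.
        exfalso. apply Hno2. exists x. auto. }
      pose proof (hh_zero_lin phi Hd Hd2 Hh0) as HLn.
      pose proof (lin_neg phi Hd HLn) as HLa.
      assert (Ca : Derive phi 0 = Derive phi 1).
      { apply (cont_eq_right (Derive phi) (fun _ => Derive phi 1)).
        - apply (@ex_derive_continuous R_AbsRing R_NormedModule), Hd2.
        - apply continuous_const.
        - auto. }
      assert (Cb : Derive phi 0 = Derive phi (-1)).
      { apply (cont_eq_left (Derive phi) (fun _ => Derive phi (-1))).
        - apply (@ex_derive_continuous R_AbsRing R_NormedModule), Hd2.
        - apply continuous_const.
        - auto. }
      exfalso. apply Hnl. exists (Derive phi 1), 0. intros x.
      destruct (Rtotal_order x 0) as [Hx|[Hx|Hx]].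
      * rewrite HLn, HLa by auto. rewrite <- Cb, Ca. ring.
      * subst. rewrite Hphi0. ring.
      * rewrite HR, HRa by auto. ring.
Qed.
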